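(* In the setting of the adaptive implicit-explicit iteration described in the context, let $a>0$ and suppose the step size satisfies $\eta^{-1}\ge\|\bm T\|+2a$. Then for every $k\ge0$, $f(\bm d_k)-f(\bm d_{k+1})\ge a\|\bm d_{k+1}-\bm d_k\|_2^2$ and $L(\bm d_k,\beta_k)-L(\bm d_{k+1},\beta_{k+1})\ge a\|\bm d_{k+1}-\bm d_k\|_2^2$.
   Context: Let $n\ge1$, $r>0$, $\bm g\in\mathbb R^n$ with $\bm g\neq0$, and $\bm H=\bm D+\bm T\in\mathbb R^{n\times n}$, where $\bm D$ is diagonal with nonnegative diagonal entries $D_{i,i}$ and $\bm T$ is symmetric; $\|\bm T\|$ is the spectral norm. Let $f(\bm d)=\bm g^\top\bm d+\frac12\bm d^\top\bm H\bm d$ and $L(\bm d,\beta)=f(\bm d)+\frac{\beta^2}{2}(\|\bm d\|_2^2-r^2)$. Adaptive implicit-explicit iteration with step size $\eta>0$: set $\bm d_0=-r\bm g/\|\bm g\|_2$ and $\lambda_0=0$. For $k=0,1,2,\dots$: let $\bm b_k=\bm d_k-\eta(\bm g+\bm T\bm d_k)$ and $\phi_k(\lambda)=\sum_{i=1}^n\big([\bm b_k]_i/(1+\eta(D_{i,i}+\lambda))\big)^2$; set $\lambda_{k+1}=0$ if $\phi_k(0)\le r^2$, and otherwise let $\lambda_{k+1}>0$ be the solution of $\phi_k(\lambda)=r^2$; then $\bm d_{k+1}=(\bm I+\eta(\bm D+\lambda_{k+1}\bm I))^{-1}\bm b_k$. Finally $\beta_k=\sqrt{\lambda_k}$. *)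

(* Defs.v *)
From mathcomp Require Import all_boot all_order all_algebra.
From mathcomp Require Import classical_sets reals.
Set Implicit Arguments. Unset Strict Implicit. Unset Printing Implicit Defensive.
Import Order.TTheory GRing.Theory Num.Theory.
Local Open Scope ring_scope.

Section Defs.
Variables (R : realType) (n : nat).

Definition dotv (u v : 'cV[R]_n) : R := \sum_(i < n) u i 0 * v i 0.
Definition norm2 (u : 'cV[R]_n) : R := Num.sqrt (dotv u u).

Definition specnorm (T : 'M[R]_n) : R :=
  sup [set norm2 (T *m x) | x in [set x : 'cV[R]_n | norm2 x <= 1]].

Definition fobj (g : 'cV[R]_n) (H : 'M[R]_n) (d : 'cV[R]_n) : R :=
  dotv g d + 2^-1 * dotv d (H *m d).

Definition Lag (g : 'cV[R]_n) (H : 'M[R]_n) (r : R) (d : 'cV[R]_n) (beta : R) : R :=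
  fobj g H d + beta ^+ 2 / 2 * (norm2 d ^+ 2 - r ^+ 2).

Definition bvec (g : 'cV[R]_n) (T : 'M[R]_n) (eta : R) (d : 'cV[R]_n) : 'cV[R]_n :=
  d - eta *: (g + T *m d).

Definition phi (D : 'M[R]_n) (eta : R) (b : 'cV[R]_n) (lam : R) : R :=
  \sum_(i < n) (b i 0 / (1 + eta * (D i i + lam))) ^+ 2.

Definition aie_iteration (g : 'cV[R]_n) (D T : 'M[R]_n) (r eta : R)
    (d : nat -> 'cV[R]_n) (lam : nat -> R) : Prop :=
  d 0%N = - (r / norm2 g) *: g /\ lam 0%N = 0 /\
  forall k : nat,
    let b := bvec g T eta (d k) in
    (phi D eta b 0 <= r ^+ 2 -> lam k.+1 = 0) /\
    (r ^+ 2 < phi D eta b 0 -> 0 < lam k.+1 /\ phi D eta b (lam k.+1) = r ^+ 2) /\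
    d k.+1 = invmx (1%:M + eta *: (D + (lam k.+1)%:M)) *m b.

End Defs.

(* Main.v *)
Require Import Defs.
From mathcomp Require Import all_boot all_order all_algebra.
From mathcomp Require Import classical_sets reals.
From mathcomp Require Import lra ring.
Import Order.TTheory GRing.Theory Num.Theory.
Local Open Scope ring_scope.
Set Warnings "-notation-overridden -ambiguous-paths".
Set Implicit Arguments. Unset Strict Implicit.
Section Dot.
Variables (R : realType) (n : nat).
Implicit Types (u v w : 'cV[R]_n) (A : 'M[R]_n).

Lemma dotvC u v : dotv u v = dotv v u.
Proof. by apply: eq_bigr => i _; rewrite mulrC. Qed.

Lemma dotvDl u w v : dotv (u + w) v = dotv u v + dotv w v.
Proof. rewrite /dotv -big_split; apply: eq_bigr => i _; by rewrite mxE mulrDl. Qed.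

Lemma dotvDr u w v : dotv v (u + w) = dotv v u + dotv v w.
Proof. by rewrite dotvC dotvDl !(dotvC v). Qed.

Lemma dotvZl c u v : dotv (c *: u) v = c * dotv u v.
Proof. rewrite /dotv mulr_sumr; apply: eq_bigr => i _; by rewrite mxE mulrA. Qed.

Lemma dotvZr c u v : dotv v (c *: u) = c * dotv v u.
Proof. by rewrite dotvC dotvZl dotvC. Qed.

Lemma dotvNl u v : dotv (- u) v = - dotv u v.
Proof. by rewrite -scaleN1r dotvZl mulN1r. Qed.

Lemma dotvNr u v : dotv v (- u) = - dotv v u.
Proof. by rewrite dotvC dotvNl dotvC. Qed.

Lemma dotvBl u w v : dotv (u - w) v = dotv u v - dotv w v.
Proof. by rewrite dotvDl dotvNl. Qed.

Lemma dotvBr u w v : dotv v (u - w) = dotv v u - dotv v w.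
Proof. by rewrite dotvDr dotvNr. Qed.

Lemma dotv0l v : dotv 0 v = 0.
Proof. by rewrite /dotv big1 // => i _; rewrite mxE mul0r. Qed.

Lemma dotv_mulmx u A v : dotv u (A *m v) = dotv (A^T *m u) v.
Proof.
rewrite /dotv.
under eq_bigr => i _ do rewrite mxE mulr_sumr.
under [in RHS]eq_bigr => i _ do rewrite mxE mulr_suml.
rewrite exchange_big /=; apply: eq_bigr => i _; apply: eq_bigr => j _.
by rewrite mxE mulrCA mulrA.
Qed.

Lemma dotv_sym u A v : A^T = A -> dotv u (A *m v) = dotv v (A *m u).
Proof. by move=> hA; rewrite dotv_mulmx hA dotvC. Qed.

Lemma dotv_ge0 u : 0 <= dotv u u.
Proof. by apply: sumr_ge0 => i _; rewrite -expr2 sqr_ge0. Qed.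

Lemma dotv_eq0 u : dotv u u = 0 -> u = 0.
Proof.
move=> /eqP; rewrite psumr_eq0; last by move=> i _; rewrite -expr2 sqr_ge0.
move=> /allP h; apply/matrixP => i j; rewrite (ord1 j) mxE.
have := h i (mem_index_enum _); rewrite /= mulf_eq0 orbb.
by move/eqP.
Qed.

Lemma norm2_sq u : norm2 u ^+ 2 = dotv u u.
Proof. by rewrite sqr_sqrtr // dotv_ge0. Qed.

Lemma norm2_ge0 u : 0 <= norm2 u.
Proof. exact: sqrtr_ge0. Qed.

Lemma coord_le u i : u i 0 ^+ 2 <= dotv u u.
Proof.
rewrite /dotv (bigD1 i) //= -expr2 lerDl.
by apply: sumr_ge0 => j _; rewrite -expr2 sqr_ge0.
Qed.

End Dot.

Section Spec.
Variables (R : realType) (n : nat).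
Implicit Types (u v w x : 'cV[R]_n) (A T : 'M[R]_n).

Lemma norm2Z c u : norm2 (c *: u) = `|c| * norm2 u.
Proof.
by rewrite /norm2 dotvZl dotvZr mulrA -expr2 sqrtrM ?sqr_ge0 // sqrtr_sqr.
Qed.

Lemma norm20 : norm2 (0 : 'cV[R]_n) = 0.
Proof. by rewrite /norm2 dotv0l sqrtr0. Qed.

Lemma spec_has_sup T :
  has_sup [set norm2 (T *m x) | x in [set x : 'cV[R]_n | norm2 x <= 1]].
Proof.
split.
  exists (norm2 (T *m 0)); exists 0 => //; by rewrite /= norm20 ler01.
exists (Num.sqrt (\sum_(i < n) (\sum_(j < n) `|T i j|) ^+ 2) : R).
move=> _ [x hx <-]; move: hx => /= hx.
rewrite /norm2 ler_sqrt; last by apply: sumr_ge0 => i _; rewrite sqr_ge0.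
have hxx : dotv x x <= 1.
  by rewrite -norm2_sq -(expr1n R 2) lerXn2r ?nnegrE ?norm2_ge0.
have hxj : forall j, `|x j 0| <= 1.
  move=> j; have h := le_trans (coord_le x j) hxx.
  rewrite ler_norml; apply/andP; split; nra.
apply: ler_sum => i _; rewrite -expr2.
rewrite -real_normK ?num_real // lerXn2r ?nnegrE //; first by apply: sumr_ge0 => j _.
rewrite mxE; apply: le_trans (ler_norm_sum _ _ _) _.
apply: ler_sum => j _; rewrite normrM.
by rewrite ler_piMr.
Qed.

Lemma specnorm_ge0 T : 0 <= specnorm T.
Proof.
apply: (sup_upper_bound (spec_has_sup T)).
exists 0; first by rewrite /= norm20 ler01.
by rewrite mulmx0 norm20.
Qed.

Lemma specnorm_le T x : norm2 (T *m x) <= specnorm T * norm2 x.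
Proof.
have [s0|spos] := eqVneq (norm2 x) 0.
  have : dotv x x = 0 by rewrite -norm2_sq s0 expr0n.
  move/dotv_eq0 => ->; by rewrite mulmx0 norm20 mulr0.
have sp : 0 < norm2 x by rewrite lt_def spos norm2_ge0.
set y := (norm2 x)^-1 *: x.
have hy : norm2 y <= 1.
  by rewrite /y norm2Z ger0_norm ?invr_ge0 ?norm2_ge0 // mulVf.
have := sup_upper_bound (spec_has_sup T) (ex_intro2 _ _ y hy erefl).
rewrite /y -scalemxAr norm2Z ger0_norm ?invr_ge0 ?norm2_ge0 //.
move=> h; rewrite /specnorm.
have := ler_wpM2l (norm2_ge0 x) h; rewrite mulrA mulfV // mul1r mulrC //.
Qed.
Lemma specnorm_quad T x : dotv x (T *m x) <= specnorm T * dotv x x.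
Proof.
set S := specnorm T; set z := T *m x.
have hq : norm2 z <= S * norm2 x := specnorm_le T x.
have hS : 0 <= S := specnorm_ge0 T.
have [S0|Spos] := eqVneq S 0.
  have z0 : norm2 z = 0.
    by apply/le_anti; rewrite norm2_ge0 andbT; move: hq; rewrite S0 mul0r.
  have : dotv z z = 0 by rewrite -norm2_sq z0 expr0n.
  by move/dotv_eq0 => ->; rewrite dotvC dotv0l S0 mul0r.
have Sp : 0 < S by rewrite lt_def Spos hS.
have h0 := dotv_ge0 (S *: x - z).
rewrite dotvBl !dotvBr !dotvZl !dotvZr (dotvC z x) in h0.
have hzz : dotv z z <= S * S * dotv x x.
  rewrite -!norm2_sq; have := norm2_ge0 z; have := norm2_ge0 x; nra.
rewrite -(ler_pM2l Sp); lra.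
Qed.

End Spec.

Section Core.
Variables (R : realType) (n : nat).
Implicit Types (u v w x y g : 'cV[R]_n) (A D T : 'M[R]_n).

Lemma fobj_expand g D T x w : D^T = D -> T^T = T ->
  fobj g (D + T) (x + w) = fobj g (D + T) x + dotv g w + dotv x (D *m w)
    + dotv x (T *m w) + 2^-1 * (dotv w (D *m w) + dotv w (T *m w)).
Proof.
move=> hD hT; rewrite /fobj !mulmxDl !mulmxDr !dotvDl !dotvDr.
rewrite (dotv_sym w x hD) (dotv_sym w x hT).
lra.
Qed.

Lemma core x y g D T eta lam S a r :
  D^T = D -> T^T = T -> (forall v, 0 <= dotv v (D *m v)) ->
  (forall v, dotv v (T *m v) <= S * dotv v v) -> 0 <= S -> 0 < eta -> 0 < a ->
  S + 2 * a <= eta^-1 -> 0 <= lam -> lam * (dotv y y - r ^+ 2) = 0 ->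
  dotv x x <= r ^+ 2 ->
  y + eta *: (D *m y + lam *: y) = x - eta *: (g + T *m x) ->
  a * dotv (y - x) (y - x) <= fobj g (D + T) x - fobj g (D + T) y.
Proof.
move=> hD hT Dpsd Tb S0 eta0 a0 hK lam0 comp xx heq.
have [w ew] : exists w, y = x + w by exists (y - x); rewrite addrC subrK.
subst y; have -> : x + w - x = w by rewrite addrC addKr.
have h1 : w + eta *: (D *m (x + w) + lam *: (x + w)) + eta *: (g + T *m x) = 0.
  by apply/(addrI x); rewrite addr0 !addrA heq subrK.
have F := congr1 (dotv w) h1.
rewrite !dotvDr !dotvZr !mulmxDr !dotvDr !dotvZr (dotvC w 0) dotv0l in F.
rewrite (dotv_sym w x hD) (dotv_sym w x hT) (dotvC w g) in F; rewrite dotvDr (dotvC w x) in F.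
rewrite fobj_expand //.
have ww := dotv_ge0 w.
have hK1 : eta * (S + 2 * a) <= 1.
  by rewrite -[leRHS](mulfV (lt0r_neq0 eta0)) ler_pM2l.
have hKw : eta * (S + 2 * a) * dotv w w <= dotv w w.
  by have := ler_wpM2r ww hK1; rewrite mul1r.
have hTw : eta * dotv w (T *m w) <= eta * (S * dotv w w).
  by rewrite ler_pM2l.
have hDw : 0 <= eta * dotv w (D *m w) by rewrite mulr_ge0 ?Dpsd // ltW.
have hSw : 0 <= eta * S * dotv w w by rewrite !mulr_ge0 // ltW.
have haw : 0 <= eta * a * dotv w w by rewrite !mulr_ge0 // ltW.
have hl : 0 <= lam * (dotv x w + dotv w w).
  move: comp; rewrite !dotvDl !dotvDr (dotvC w x) => comp.
  nra.
have hl' : 0 <= eta * (lam * (dotv x w + dotv w w)) by rewrite mulr_ge0 // ltW.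
rewrite -subr_ge0 -(pmulr_rge0 _ eta0).
lra.
Qed.

End Core.

Section Diag.
Variables (R : realType) (n : nat).

Lemma diag_solve (D : 'M[R]_n) (eta lam : R) (b : 'cV[R]_n) :
  (forall i j : 'I_n, i != j -> D i j = 0) -> (forall i, 0 <= D i i) ->
  0 < eta -> 0 <= lam ->
  (1%:M + eta *: (D + lam%:M)) \in unitmx /\
  (forall i, (invmx (1%:M + eta *: (D + lam%:M)) *m b) i 0
     = b i 0 / (1 + eta * (D i i + lam))).
Proof.
move=> Ddiag Dpos eta0 lam0.
set M := 1%:M + eta *: (D + lam%:M).
have Mii : forall i, M i i = 1 + eta * (D i i + lam) by move=> i; rewrite !mxE eqxx.
have Mij : forall i j, i != j -> M i j = 0.
  by move=> i j h; rewrite !mxE (negbTE h) Ddiag // !mulr0n addr0 mulr0 addr0.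
have Mpos : forall i, 0 < M i i.
  move=> i; rewrite Mii; have := Dpos i; nra.
have eM : M = diag_mx (\row_i M i i).
  apply/matrixP => i j; rewrite [RHS]mxE mxE.
  by case: (eqVneq i j) => [->|h]; rewrite ?eqxx ?mulr1n // mulr0n Mij.
have U : M \in unitmx.
  rewrite unitmxE eM det_diag unitfE lt0r_neq0 //.
  by apply: prodr_gt0 => i _; rewrite mxE.
split => // i.
have hM : M *m (invmx M *m b) = b := mulKVmx U b.
have := congr1 (fun v : 'cV[R]_n => v i 0) hM => /=.
rewrite mxE (bigD1 i) //= big1 ?addr0 => [h|j hj]; last first.
  by rewrite Mij 1?eq_sym // mul0r.
by rewrite -Mii -h mulrAC mulfV ?mul1r // lt0r_neq0.
Qed.

End Diag.

Unset Implicit Arguments. Set Strict Implicit.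
Theorem mainTheorem4 (R : realType) (n : nat) (r : R) (g : 'cV[R]_n)
    (D T : 'M[R]_n) (eta a : R) (d : nat -> 'cV[R]_n) (lam : nat -> R) :
  (0 < n)%N -> 0 < r -> g != 0 ->
  (forall i j : 'I_n, i != j -> D i j = 0) ->
  (forall i : 'I_n, 0 <= D i i) ->
  T^T = T ->
  0 < eta -> 0 < a ->
  specnorm T + 2 * a <= eta^-1 ->
  aie_iteration g D T r eta d lam ->
  forall k : nat,
    fobj g (D + T) (d k) - fobj g (D + T) (d k.+1)
      >= a * norm2 (d k.+1 - d k) ^+ 2 /\
    Lag g (D + T) r (d k) (Num.sqrt (lam k))
      - Lag g (D + T) r (d k.+1) (Num.sqrt (lam k.+1))
      >= a * norm2 (d k.+1 - d k) ^+ 2.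
Proof.
move=> n0 r0 g0 Ddiag Dpos Tsym eta0 a0 hS [hd0 [hl0 hit]].
have DT : D^T = D.
  apply/matrixP => i j; rewrite mxE.
  by case: (eqVneq i j) => [->//|h]; rewrite !Ddiag // eq_sym.
have Dpsd : forall v : 'cV[R]_n, 0 <= dotv v (D *m v).
  move=> v; apply: sumr_ge0 => i _; rewrite mxE (bigD1 i) //= big1 ?addr0.
    by rewrite mulrCA mulr_ge0 // -expr2 sqr_ge0.
  by move=> j hj; rewrite Ddiag ?mul0r // eq_sym.
have Tb : forall v : 'cV[R]_n, dotv v (T *m v) <= specnorm T * dotv v v.
  by move=> v; apply: specnorm_quad.
have S0 := specnorm_ge0 T.
have lam_ge0 : forall k, 0 <= lam k.
  case=> [|k]; first by rewrite hl0.
  have [h1 [h2 _]] := hit k.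
  have [h|h] := leP (phi D eta (bvec g T eta (d k)) 0) (r ^+ 2).
    by rewrite (h1 h).
  by have [/ltW] := h2 h.
have step : forall k, dotv (d k.+1) (d k.+1) = phi D eta (bvec g T eta (d k)) (lam k.+1)
   /\ d k.+1 + eta *: (D *m d k.+1 + lam k.+1 *: d k.+1) = d k - eta *: (g + T *m d k).
  move=> k; have [_ [_ ed]] := hit k.
  have [U E] := diag_solve (bvec g T eta (d k)) Ddiag Dpos eta0 (lam_ge0 k.+1).
  split.
    by rewrite ed /dotv /phi; apply: eq_bigr => i _; rewrite E expr2.
  have := mulKVmx U (bvec g T eta (d k)); rewrite -ed.
  by rewrite mulmxDl mul1mx -scalemxAl mulmxDl mul_scalar_mx.
have nrm : forall k, dotv (d k) (d k) <= r ^+ 2 /\ lam k * (dotv (d k) (d k) - r ^+ 2) = 0.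
  case=> [|k].
    rewrite hl0 mul0r; split => //.
    rewrite hd0 dotvZl dotvZr -norm2_sq.
    have ng : norm2 g != 0.
      apply/negP => /eqP h; move/negP: g0; apply; apply/eqP; apply: dotv_eq0.
      by rewrite -norm2_sq h expr0n.
    have -> : - (r / norm2 g) * (- (r / norm2 g) * norm2 g ^+ 2) = r ^+ 2 by field.
    by [].
  have [st _] := step k; have [h1 [h2 _]] := hit k; rewrite st.
  have [h|h] := leP (phi D eta (bvec g T eta (d k)) 0) (r ^+ 2).
    by rewrite (h1 h) mul0r; split.
  by have [_ ->] := h2 h; rewrite subrr mulr0; split.
move=> k.
have [_ eq] := step k.
have [nk ck] := nrm k; have [nk1 ck1] := nrm k.+1.
have hf := core DT Tsym Dpsd Tb S0 eta0 a0 hS (lam_ge0 k.+1) ck1 nk eq.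
rewrite norm2_sq; split => //.
rewrite /Lag !sqr_sqrtr ?lam_ge0 ?dotv_ge0 // ?norm2_sq.
lra.
Qed.
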